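(* Let $r\ge 2$, $\alpha=2^r-1$, $\beta=2^{r-1}(2^r-1)$, let $\mathcal{C}\subseteq\mathbb{Z}_2^\alpha\times\mathbb{Z}_4^\beta$ be a $\mathbb{Z}_2\mathbb{Z}_4$-additive 1-perfect code and $D=\mathcal{C}^\perp$, and assume $D$ is $\mathbb{Z}_2\mathbb{Z}_4$-cyclic. Let $\mathbf{z}=(x\mid y)\in D$ with $x\in\mathbb{Z}_2^\alpha$, $y\in\mathbb{Z}_4^\beta$, be a codeword of order 4 (i.e. $2\mathbf{z}\neq 0$). Then $y$ has exactly $2^{2r-2}$ coordinates in $\{1,3\}$, exactly $2^{r-2}(2^{r-1}-1)$ coordinates equal to $2$, and exactly $2^{r-2}(2^{r-1}-1)$ coordinates equal to $0$.
   Context: A $\mathbb{Z}_2\mathbb{Z}_4$-additive code is an additive subgroup of $\mathbb{Z}_2^\alpha\times\mathbb{Z}_4^\beta$; vectors are $(u\mid u')$ with $u\in\mathbb{Z}_2^\alpha$, $u'\in\mathbb{Z}_4^\beta$. The Gray map $\phi:\mathbb{Z}_4\to\mathbb{Z}_2^2$ is $0\mapsto(0,0),1\mapsto(0,1),2\mapsto(1,1),3\mapsto(1,0)$, $\Phi(u\mid u')=(u\mid\phi(u'_1),\dots,\phi(u'_\beta))$. A binary code $C\subseteq\mathbb{Z}_2^n$ is 1-perfect if the Hamming balls of radius 1 around its codewords partition $\mathbb{Z}_2^n$; a $\mathbb{Z}_2\mathbb{Z}_4$-additive code is 1-perfect if its Gray image is. The dual is $\mathcal{C}^\perp=\{\mathbf{v}:\mathbf{u}\cdot\mathbf{v}=0\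 \forall\mathbf{u}\in\mathcal{C}\}$ with $\mathbf{u}\cdot\mathbf{v}=2\sum_{i=1}^\alpha u_iv_i+\sum_{j=1}^\beta u'_jv'_j\in\mathbb{Z}_4$. With $\sigma(v_1,\dots,v_m)=(v_m,v_1,\dots,v_{m-1})$ and $\sigma(u\mid u')=(\sigma(u)\mid\sigma(u'))$, a code is $\mathbb{Z}_2\mathbb{Z}_4$-cyclic if closed under $\sigma$. *)

(* Defs.v *)
From HB Require Import structures.
From mathcomp Require Import all_boot all_order all_algebra.
Set Implicit Arguments. Unset Strict Implicit. Unset Printing Implicit Defensive.
Import GRing.Theory.
Local Open Scope ring_scope.

Definition ZZvec (a b : nat) : finType :=
  ({ffun 'I_a -> 'Z_2} * {ffun 'I_b -> 'Z_4})%type.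

Definition zzadd a b (u v : ZZvec a b) : ZZvec a b :=
  ([ffun i => u.1 i + v.1 i], [ffun j => u.2 j + v.2 j]).

Definition zzzero a b : ZZvec a b := ([ffun=> 0], [ffun=> 0]).

(* an additive subgroup (finite, so closure under 0 and + suffices) *)
Definition additive_code a b (C : {set ZZvec a b}) : Prop :=
  zzzero a b \in C /\ forall u v, u \in C -> v \in C -> zzadd u v \in C.

Definition gray4 (x : 'Z_4) : bool * bool :=
  match val x with
  | 0%N => (false, false)
  | 1%N => (false, true)
  | 2%N => (true, true)
  | _ => (true, false)
  end.

(* Gray image: binary word indexed by 'I_a + ('I_b * bool); the second
   component (j, false)/(j, true) is the first/second bit of phi(u'_j). *)
Definition binword (I : finType) := {ffun I -> bool}.

Definition Phi a b (u : ZZvec a b) : binword ('I_a + ('I_b * bool))%type :=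
  [ffun k => match k with
             | inl i => val (u.1 i) == 1%N
             | inr (j, false) => (gray4 (u.2 j)).1
             | inr (j, true) => (gray4 (u.2 j)).2
             end].

Definition hamming (I : finType) (w c : binword I) : nat := #|[set i | w i != c i]|.

Definition perfect1_bin (I : finType) (B : {set binword I}) : Prop :=
  forall w : binword I, exists! c, c \in B /\ (hamming w c <= 1)%N.

Definition perfect1 a b (C : {set ZZvec a b}) : Prop :=
  perfect1_bin [set Phi u | u in C].

Definition lift24 (x : 'Z_2) : 'Z_4 := (val x)%:R.

Definition zzdot a b (u v : ZZvec a b) : 'Z_4 :=
  2%:R * (\sum_(i < a) lift24 (u.1 i) * lift24 (v.1 i))
  + \sum_(j < b) u.2 j * v.2 j.

Definition dual a b (C : {set ZZvec a b}) : {set ZZvec a b} :=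
  [set v | [forall u in C, zzdot u v == 0]].

Definition sigma_vec (T : Type) m (v : {ffun 'I_m -> T}) : {ffun 'I_m -> T} :=
  [ffun i => v (ord_pred i)].

Definition zzsigma a b (u : ZZvec a b) : ZZvec a b :=
  (sigma_vec u.1, sigma_vec u.2).

Definition zzcyclic a b (C : {set ZZvec a b}) : Prop :=
  forall u, u \in C -> zzsigma u \in C.

(* Main.v *)
Require Import Defs.
From mathcomp Require Import all_boot all_order all_algebra.
From mathcomp Require Import zify.
Import GRing.Theory.
Local Open Scope ring_scope.

Ltac z4 x := case: x => -[|[|[|[|?]]]] //= ?.
Ltac z2 x := case: x => -[|[|?]] //= ?.

Definition lee (v : 'Z_4) : nat := if v == 0 then 0%N else if v == 2%:R then 2%N else 1%N.

Lemma gray_dist (x y : 'Z_4) :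
  (((gray4 x).2 != (gray4 y).2) + ((gray4 x).1 != (gray4 y).1))%N = lee (x - y).
Proof. z4 x; z4 y. Qed.

Lemma z2_dist (x y : 'Z_2) : ((val x == 1%N) != (val y == 1%N)) = (x - y != 0).
Proof. z2 x; z2 y. Qed.

Section S.
Variables a b : nat.
Definition V := ({ffun 'I_a -> 'Z_2} * {ffun 'I_b -> 'Z_4})%type.

Definition wL (d : V) : nat := (\sum_i (d.1 i != 0%R) + \sum_j lee (d.2 j))%N.

Lemma card_setP (T : finType) (P : pred T) : #|[set x | P x]| = (\sum_x P x)%N.
Proof. by rewrite -sum1dep_card big_mkcond; apply: eq_bigr => x _; case: (P x). Qed.

Lemma hamPhi (u c : V) : hamming (Phi u) (Phi c) = wL (u - c).
Proof.
rewrite /hamming card_setP big_sumType /wL; congr (_ + _)%N.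
  by apply: eq_bigr => i _; rewrite !ffunE /=; move: (u.1 i) (c.1 i) => x y; z2 x; z2 y.
transitivity (\sum_j \sum_bb ((Phi u (inr (j,bb)) != Phi c (inr (j,bb))) : nat))%N.
  by rewrite pair_bigA; apply: eq_bigr => -[].
apply: eq_bigr => j _; rewrite big_bool !ffunE /=; exact: gray_dist.
Qed.

Definition ea (i : 'I_a) : V := ([ffun i' => (i' == i)%:R], 0).
Definition eb (j : 'I_b) : V := (0, [ffun j' => (j' == j)%:R]).
Definition Eidx := (('I_1 + 'I_a) + ('I_b * bool))%type.
Definition ev (k : Eidx) : V :=
  match k with
  | inl (inl _) => 0
  | inl (inr i) => ea i
  | inr (j, false) => eb j
  | inr (j, true) => - eb j
  end.

Lemma sum_single (T : finType) (F : T -> nat) t :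
  (forall x, x != t -> F x = 0%N) -> (\sum_x F x)%N = F t.
Proof.
move=> H; rewrite (bigD1 t) //= big1 ?addn0 // => x /andP[_ hx]; exact: H.
Qed.

Lemma wL_ev k : (wL (ev k) <= 1)%N.
Proof.
case: k => [[_|i]|[j []]] /=; rewrite /wL.
- by rewrite !big1 // => x _; rewrite ffunE.
- rewrite (@sum_single _ _ i) ?ffunE ?eqxx; last first.
    by move=> x hx; rewrite ffunE (negbTE hx).
  by rewrite big1 // => x _; rewrite ffunE.
- rewrite big1 ?add0n; last by move=> x _; rewrite !ffunE oppr0.
  rewrite (@sum_single _ _ j) ?ffunE ?eqxx //.
  by move=> x hx; rewrite !ffunE (negbTE hx) oppr0.
- rewrite big1 ?add0n; last by move=> x _; rewrite ffunE.
  rewrite (@sum_single _ _ j) ?ffunE ?eqxx //.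
  by move=> x hx; rewrite !ffunE (negbTE hx).
Qed.

Lemma lee0 (v : 'Z_4) : (lee v == 0%N) = (v == 0).
Proof. z4 v. Qed.
Lemma lee1 (v : 'Z_4) : (lee v == 1%N) = (v == 1) || (v == -1).
Proof. z4 v. Qed.
Lemma z2nz (x : 'Z_2) : (x != 0) = (x == 1).
Proof. z2 x. Qed.

Lemma wL_le1 d : (wL d <= 1)%N -> exists k, d = ev k.
Proof.
case: d => d1 d2; rewrite /wL /= => h.
have [i hi|h1] := pickP (fun i => d1 i != 0).
  rewrite (bigD1 i) //= hi -addnA add1n ltnS leqn0 addn_eq0 in h.
  case/andP: h; rewrite !sum_nat_eq0 => /forallP H1 /forallP H2.
  exists (inl (inr i)); rewrite /= /ea; congr (_, _); apply/ffunP => x; rewrite !ffunE.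
    have [->|hx] := eqVneq x i; first by apply/eqP; rewrite -z2nz.
    by have := H1 x; rewrite /= hx /=; case: (d1 x =P 0).
  by apply/eqP; rewrite -lee0; exact: (H2 x).
rewrite big1 ?add0n in h; last by move=> i _; rewrite h1.
have [j hj|h2] := pickP (fun j => lee (d2 j) != 0%N).
  rewrite (bigD1 j) //= in h.
  have hl : lee (d2 j) = 1%N.
    by move: hj h => /=; case: (lee (d2 j)) => [|[|]].
  rewrite hl add1n ltnS leqn0 sum_nat_eq0 in h; move/forallP: h => H2.
  have H2' : forall x, x != j -> d2 x = 0.
    by move=> x hx; apply/eqP; rewrite -lee0; have := H2 x; rewrite /= hx.
  have d10 : d1 = 0 by apply/ffunP => x; rewrite !ffunE; apply/eqP; move: (h1 x) => /= /negbFE.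
  move/eqP: hl; rewrite lee1 => /orP[]/eqP hv.
    exists (inr (j, false)); rewrite /= /eb d10; congr (_, _); apply/ffunP => x; rewrite !ffunE.
    by have [->|hx] := eqVneq x j; [rewrite hv | rewrite H2'].
  exists (inr (j, true)); rewrite /= /eb d10; congr (_, _); first by rewrite oppr0.
  apply/ffunP => x; rewrite !ffunE.
  by have [->|hx] := eqVneq x j; [rewrite hv | rewrite H2' ?oppr0].
exists (inl (inl ord0)); congr (_, _); apply/ffunP => x; rewrite !ffunE; apply/eqP.
  by move: (h1 x) => /= /negbFE.
by rewrite -lee0; move: (h2 x) => /= /negbFE.
Qed.

Lemma ev_inj : injective ev.
Proof.
have z2f : ((1 : 'Z_2) == 0) = false by [].
have z2f' : ((0 : 'Z_2) == 1) = false by [].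
have z4a : ((1 : 'Z_4) == 0) = false by [].
have z4a' : ((0 : 'Z_4) == 1) = false by [].
have z4b : ((-1 : 'Z_4) == 0) = false by [].
have z4b' : ((0 : 'Z_4) == -1) = false by [].
have z4c : ((1 : 'Z_4) == -1) = false by [].
have z4c' : ((-1 : 'Z_4) == 1) = false by [].
have z4d : ((-0 : 'Z_4) == 1) = false by [].
have z4d' : ((-1 : 'Z_4) == -0) = false by [].
move=> k1 k2.
case: k1 => [[t1|i1]|[j1 []]]; case: k2 => [[t2|i2]|[j2 []]] //= e;
  have e1 := congr1 fst e; have e2 := congr1 snd e; rewrite /= in e1 e2.
all: try by rewrite (ord1 t1) (ord1 t2).
all: try by move/ffunP: e1 => /(_ i2); rewrite !ffunE eqxx => /eqP; rewrite ?z2f ?z2f'.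
all: try by move/ffunP: e1 => /(_ i1); rewrite !ffunE eqxx => /eqP; rewrite ?z2f ?z2f'.
all: try by move/ffunP: e2 => /(_ j2); rewrite !ffunE eqxx ?oppr0 => /eqP;
  rewrite ?z4a ?z4a' ?z4b ?z4b' ?z4d ?z4d'.
all: try by move/ffunP: e2 => /(_ j1); rewrite !ffunE eqxx ?oppr0 => /eqP;
  rewrite ?z4a ?z4a' ?z4b ?z4b' ?z4d ?z4d'.
all: try (move/ffunP: e1 => /(_ i1); rewrite !ffunE eqxx;
  by have [->//|h] := eqVneq i1 i2; move=> /eqP; rewrite ?z2f).
all: move/ffunP: e2 => /(_ j1); rewrite !ffunE eqxx.
all: have [->|h] := eqVneq j1 j2; try done.
all: move/eqP; rewrite ?oppr0 ?z4a ?z4a' ?z4b ?z4b' ?z4c ?z4c' ?z4d ?z4d' //.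
Qed.

Lemma wL0 d : wL d = 0%N -> d = 0.
Proof.
case: d => d1 d2; rewrite /wL /= => /eqP; rewrite addn_eq0 !sum_nat_eq0.
case/andP => /forallP H1 /forallP H2; congr (_, _); apply/ffunP => x; rewrite ffunE.
  by move: (H1 x) => /=; case: (d1 x =P 0).
by apply/eqP; rewrite -lee0; exact: (H2 x).
Qed.

Lemma Phi_inj (u v : V) : Phi u = Phi v -> u = v.
Proof.
move=> e; have : hamming (Phi u) (Phi v) = 0%N.
  by rewrite /hamming e; apply/eqP; rewrite cards_eq0; apply/eqP/setP => x; rewrite !inE eqxx.
by rewrite hamPhi => /wL0 /eqP; rewrite subr_eq0 => /eqP.
Qed.

Variable C : {set ZZvec a b}.
Hypothesis hadd : additive_code C.
Hypothesis hperf : perfect1 C.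

Lemma decomp_ex (w : V) : exists c k, c \in C /\ w = c + ev k.
Proof.
have [c' [[hc' hd] _]] := hperf (Phi w).
case/imsetP: hc' => c hc ec; rewrite ec hamPhi in hd.
have [k hk] := wL_le1 _ hd.
by exists c, k; split => //; rewrite -hk addrC subrK.
Qed.

Lemma decomp_uniq (c1 c2 : V) k1 k2 : c1 \in C -> c2 \in C ->
  c1 + ev k1 = c2 + ev k2 -> c1 = c2 /\ k1 = k2.
Proof.
move=> h1 h2 e.
have [c' [_ hu]] := hperf (Phi (c1 + ev k1)).
have E1 := hu (Phi c1); have E2 := hu (Phi c2).
rewrite !hamPhi in E1 E2.
have ec : c1 = c2.
  apply: Phi_inj; rewrite -E1 ?E2 //; split; rewrite ?imset_f //.
    by rewrite e addrC addKr wL_ev.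
  by rewrite addrC addKr wL_ev.
split => //; apply: ev_inj; apply: (addrI c1); rewrite e ec //.
Qed.

Lemma count_inv (P : pred V) : (forall (c w : V), c \in C -> P (c + w) = P w) ->
  #|[set w : V | P w]| = (#|C| * #|[set k : Eidx | P (ev k)]|)%N.
Proof.
move=> hP; rewrite -cardsX.
have -> : [set w : V | P w] =
    [set ((x.1 : V) + ev x.2) | x in setX C [set k : Eidx | P (ev k)]].
  apply/setP => w; rewrite inE; apply/idP/imsetP.
    move=> hw; have [c [k [hc ew]]] := decomp_ex w.
    exists (c, k) => //; apply/setXP; split => //; rewrite inE -(hP c) // -ew //.
  by case=> -[c k] /setXP [hc]; rewrite inE /= => hk ->; rewrite hP.
apply: card_in_imset => -[c1 k1] [c2 k2] /setXP [h1 _] /setXP [h2 _] /= e.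
by have [-> ->] := @decomp_uniq c1 c2 k1 k2 h1 h2 e.
Qed.

Lemma transl (P : pred V) (s : V) : #|[set w : V | P (w + s)]| = #|[set w : V | P w]|.
Proof.
have -> : [set w : V | P w] = [set x + s | x : V in [set w : V | P (w + s)]].
  apply/setP => w; rewrite inE.
  apply/idP/imsetP; last by case=> x; rewrite inE => hx ->.
  by move=> hw; exists (w - s); rewrite ?inE subrK.
by rewrite (card_imset _ (addIr s)).
Qed.

Lemma lift2D (x y : 'Z_2) :
  2%:R * lift24 (x + y) = 2%:R * lift24 x + 2%:R * lift24 y :> 'Z_4.
Proof. by case: x => -[|[|?]] // ?; case: y => -[|[|?]] // ?; apply/val_inj. Qed.

Lemma zzdotD (u v z : V) : zzdot (u + v) z = zzdot u z + zzdot v z.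
Proof.
rewrite /zzdot.
transitivity ((2%:R * \sum_i lift24 (u.1 i) * lift24 (z.1 i)
               + 2%:R * \sum_i lift24 (v.1 i) * lift24 (z.1 i))
              + (\sum_j u.2 j * z.2 j + \sum_j v.2 j * z.2 j)); last first.
  by rewrite addrACA.
congr (_ + _).
  rewrite !mulr_sumr -big_split; apply: eq_bigr => i _.
  by rewrite ffunE !mulrA lift2D mulrDl.
by rewrite -big_split; apply: eq_bigr => j _; rewrite ffunE mulrDl.
Qed.

Lemma zzdot0 (z : V) : zzdot (0 : V) z = 0.
Proof. by apply/(addrI (zzdot (0 : V) z)); rewrite -zzdotD !addr0. Qed.

Lemma zzdotN (u z : V) : zzdot (- u) z = - zzdot u z.
Proof. by apply: (addrI (zzdot u z)); rewrite -zzdotD !subrr zzdot0. Qed.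

Lemma zzdot_ea i (z : V) :
  zzdot (ea i) z = 2%:R * (\sum_i' lift24 ((ea i).1 i') * lift24 (z.1 i')).
Proof. by rewrite /zzdot [X in _ + X]big1 ?addr0 // => j _; rewrite ffunE mul0r. Qed.

Lemma zzdot_eb j (z : V) : zzdot (eb j) z = z.2 j.
Proof.
rewrite /zzdot big1 ?mulr0 ?add0r; last by move=> i _; rewrite ffunE mul0r.
rewrite (bigD1 j) //= big1 ?addr0; first by rewrite ffunE eqxx mul1r.
move=> x hx; rewrite ffunE (negbTE hx) mul0r //.
Qed.

Lemma four (u : V) : u + u + u + u = 0.
Proof.
case: u => u1 u2; congr (_, _); apply/ffunP => x; rewrite !ffunE.
  by case: (u1 x) => -[|[|?]] // ?; apply/val_inj.
by case: (u2 x) => -[|[|[|[|?]]]] // ?; apply/val_inj.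
Qed.

Lemma C0 : (0 : V) \in C.
Proof. exact: hadd.1. Qed.
Lemma CD (u v : V) : u \in C -> v \in C -> u + v \in C.
Proof. exact: hadd.2. Qed.
Lemma CN (u : V) : u \in C -> - u \in C.
Proof.
move=> hu; have -> : - u = u + u + u.
  by apply/(addrI u); rewrite subrr !addrA four.
by rewrite !CD.
Qed.

Lemma sumE (F : Eidx -> nat) : (\sum_x F x =
  F (inl (inl ord0)) + \sum_i F (inl (inr i)) + \sum_j (F (inr (j, true)) + F (inr (j, false))))%N.
Proof.
rewrite big_sumType big_sumType big_ord1; congr (_ + _)%N.
transitivity (\sum_j \sum_bb F (inr (j, bb)))%N.
  by rewrite pair_bigA; apply: eq_bigr => -[].
by apply: eq_bigr => j _; rewrite big_bool.
Qed.

Lemma notC2 j bb : ev (inr (j, bb)) + ev (inr (j, bb)) \notin C.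
Proof.
have e' : ev (inr (j, ~~ bb)) = - ev (inr (j, bb)) by case: bb => //=; rewrite opprK.
apply/negP => h.
have := @decomp_uniq 0 _ (inr (j, bb)) (inr (j, ~~ bb)) C0 h.
rewrite e' add0r addrK => /(_ erefl) [_ []] /eqP; by case: (bb).
Qed.

Variable z : V.
Hypothesis hz : z \in dual C.
Hypothesis hord : z + z != 0.

Lemma fC (c : V) : c \in C -> zzdot c z = 0.
Proof. by move=> hc; move: hz; rewrite inE => /forallP /(_ c); rewrite hc => /eqP. Qed.

Lemma cnt_eq k : #|[set w : V | zzdot w z == k]| =
  (#|C| * #|[set x : Eidx | zzdot (ev x) z == k]|)%N.
Proof. by apply: count_inv => c w hc; rewrite zzdotD fC // add0r. Qed.

Lemma cntT_eq k : #|[set w : V | (w + w \in C) && (zzdot w z == k)]| =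
  (#|C| * #|[set x : Eidx | ((ev x + ev x)%R \in C) && (zzdot (ev x) z == k)]|)%N.
Proof.
apply: count_inv => c w hc; rewrite zzdotD fC // add0r addrACA; apply: andb_id2r => _.
apply/idP/idP => h; last by apply: CD => //; exact: CD.
by have := CD _ _ h (CN _ (CD _ _ hc hc)); rewrite [X in X \in C]addrC addKr.
Qed.

Lemma odd4 (v : 'Z_4) : v + v != 0 -> (v == 1) || (v == -1).
Proof. by case: v => -[|[|[|[|?]]]] // ?. Qed.

Lemma w0_ex : exists w0 : V, zzdot w0 z = 1.
Proof.
have [j hj] : exists j, z.2 j + z.2 j != 0.
  apply/existsP; apply: contraR hord => /existsPn H.
  have -> : z + z = ((z + z).1, (z + z).2) by case: (z + z).
  apply/eqP; congr (_, _); apply/ffunP => x; rewrite !ffunE.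
    by case: (z.1 x) => -[|[|?]] // ?; apply/val_inj.
  by apply/eqP; move: (H x); rewrite negbK.
case/orP: (odd4 _ hj) => /eqP hv.
  by exists (eb j); rewrite zzdot_eb.
by exists (- eb j); rewrite zzdotN zzdot_eb hv opprK.
Qed.

Lemma Cpos : (0 < #|C|)%N.
Proof. by apply/card_gt0P; exists 0; exact: C0. Qed.

Lemma z4_a (v : 'Z_4) : ((- v == 1%R) + (v == 1%R))%N = ((v == 1%R) || (v == 3%:R%R)).
Proof. by case: v => -[|[|[|[|?]]]] // ?. Qed.
Lemma z4_b (v : 'Z_4) : ((- v == 3%:R%R) + (v == 3%:R%R))%N = ((v == 1%R) || (v == 3%:R%R)).
Proof. by case: v => -[|[|[|[|?]]]] // ?. Qed.
Lemma z4_c (v : 'Z_4) : ((- v == 0%R) + (v == 0%R))%N = (2 * (v == 0%R))%N.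
Proof. by case: v => -[|[|[|[|?]]]] // ?. Qed.
Lemma z4_d (v : 'Z_4) : ((- v == 2%:R%R) + (v == 2%:R%R))%N = (2 * (v == 2%:R%R))%N.
Proof. by case: v => -[|[|[|[|?]]]] // ?. Qed.
Lemma z4_e (v : 'Z_4) : (((v == 1%R) || (v == 3%:R%R)) + (v == 2%:R%R) + (v == 0%R))%N = 1%N.
Proof. by case: v => -[|[|[|[|?]]]] // ?. Qed.
Lemma z4_f (v : 'Z_4) : (v + (1 + 1)%R == 2%:R%R) = (v == 0%R).
Proof. by case: v => -[|[|[|[|?]]]] // ?. Qed.
Lemma z4_g (t : 'Z_4) : (2%:R%R * t == 1%R) = false.
Proof. by case: t => -[|[|[|[|?]]]] // ?. Qed.
Lemma z4_h (t : 'Z_4) : (((2%:R * t)%R == 0%R) + ((2%:R * t)%R == 2%:R%R))%N = 1%N.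
Proof. by case: t => -[|[|[|[|?]]]] // ?. Qed.

Lemma ea2 i : ea i + ea i = 0.
Proof.
congr (_, _); apply/ffunP => x; rewrite !ffunE ?addr0 //.
by case: (_ == _); apply/val_inj.
Qed.

Lemma main_count : exists u0,
  let nodd := #|[set j | (z.2 j == 1%R) || (z.2 j == 3%:R%R)]| in
  let ntwo := #|[set j | z.2 j == 2%:R%R]| in
  let nzero := #|[set j | z.2 j == 0%R]| in
  [/\ (4 * nodd = 1 + a + 2 * b)%N, (2 * u0 = 1 + a)%N,
      (u0 + 2 * ntwo = nodd)%N & (u0 + 2 * nzero = nodd)%N].
Proof.
pose cnt (k : 'Z_4) := #|[set x : Eidx | zzdot (ev x) z == k]|.
pose G (k : 'Z_4) := #|[set x : Eidx | ((ev x + ev x) \in C) && (zzdot (ev x) z == k)]|.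
pose u (k : 'Z_4) := ((0 == k) + \sum_i (zzdot (ea i) z == k))%N.
pose W (k : 'Z_4) := (\sum_j ((- z.2 j == k) + (z.2 j == k)))%N.
have [w0 hw0] := w0_ex.
have cntS k : cnt (k + 1) = cnt k.
  apply/eqP; rewrite -(eqn_pmul2l Cpos) -!cnt_eq; apply/eqP.
  rewrite -(transl (fun w => zzdot w z == k + 1) w0); apply: eq_card => w.
  by rewrite !inE zzdotD hw0 (inj_eq (addIr 1)).
have cntE k : cnt k = (u k + W k)%N.
  rewrite /cnt card_setP sumE /= zzdot0 /u /W; congr (_ + _)%N.
  by apply: eq_bigr => j _; rewrite zzdotN !zzdot_eb.
have GE k : G k = u k.
  rewrite /G card_setP sumE [\sum_(j < b) _]big1 ?addn0; last first.
    by move=> j _; rewrite (negbTE (notC2 j true)) (negbTE (notC2 j false)).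
  rewrite /= addr0 C0 zzdot0 /u; congr (_ + _)%N.
  by apply: eq_bigr => i _; rewrite ea2 C0.
have GS : G 2%:R%R = G 0.
  apply/eqP; rewrite -(eqn_pmul2l Cpos) -!cntT_eq; apply/eqP.
  rewrite -(transl (fun w => (w + w \in C) && (zzdot w z == 2%:R%R)) (w0 + w0)).
  apply: eq_card => w; rewrite !inE addrACA.
  have -> : w0 + w0 + (w0 + w0) = 0 by rewrite !addrA four.
  by rewrite addr0 zzdotD zzdotD hw0 z4_f.
have u1 : u 1 = 0%N.
  rewrite /u big1 // => i _; rewrite zzdot_ea z4_g //.
have u02 : (u 0%R + u 2%:R%R = 1 + a)%N.
  rewrite /u addnACA -big_split /=.
  rewrite (eq_bigr (fun _ => 1%N)); last by move=> i _; rewrite zzdot_ea z4_h.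
  by rewrite sum_nat_const card_ord muln1.
have W1 : W 1 = #|[set j | (z.2 j == 1%R) || (z.2 j == 3%:R%R)]|.
  by rewrite /W card_setP; apply: eq_bigr => j _; rewrite z4_a.
have W3 : W 3%:R%R = #|[set j | (z.2 j == 1%R) || (z.2 j == 3%:R%R)]|.
  by rewrite /W card_setP; apply: eq_bigr => j _; rewrite z4_b.
have W0 : W 0 = (2 * #|[set j | z.2 j == 0%R]|)%N.
  by rewrite /W card_setP big_distrr; apply: eq_bigr => j _; rewrite z4_c.
have W2 : W 2%:R%R = (2 * #|[set j | z.2 j == 2%:R%R]|)%N.
  by rewrite /W card_setP big_distrr; apply: eq_bigr => j _; rewrite z4_d.
have Wb : (#|[set j | (z.2 j == 1%R) || (z.2 j == 3%:R%R)]| + #|[set j | z.2 j == 2%:R%R]|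
           + #|[set j | z.2 j == 0%R]| = b)%N.
  rewrite !card_setP -!big_split /=.
  rewrite (eq_bigr (fun _ => 1%N)); last by move=> j _; rewrite z4_e.
  by rewrite sum_nat_const card_ord muln1.
have c10 : cnt 1 = cnt 0 by rewrite -(cntS 0) add0r.
have c21 : cnt 2%:R%R = cnt 1 by rewrite -(cntS 1).
have c32 : cnt 3%:R%R = cnt 2%:R%R by rewrite -(cntS 2%:R%R).
have u3 : u 3%:R%R = 0%N.
  rewrite /u big1 // => i _; rewrite zzdot_ea.
  by move: (\sum_(i' < a) _) => t; case: t => -[|[|[|[|?]]]] // ?.
exists (u 0); rewrite /=.
move: c10 c21 c32; rewrite !cntE u1 u3 W1 W3 W0 W2 -!GE GS => c10 c21 c32.
rewrite !GE in c10 c21 c32 u02 *.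
move: u02 Wb c10 c21 c32.
set x := u 0; set y := u 2%:R%R.
set o := #|[set j | (z.2 j == 1%R) || (z.2 j == 3%:R%R)]|.
set t := #|[set j | z.2 j == 2%:R%R]|.
set n0 := #|[set j | z.2 j == 0%R]|.
have xy : x = y by rewrite /x /y -!GE GS.
rewrite -xy => *; split; lia.
Qed.
End S.

Theorem corollary3p6 (r : nat) (hr : (2 <= r)%N)
  (C : {set ZZvec (2 ^ r - 1) (2 ^ (r - 1) * (2 ^ r - 1))})
  (hadd : additive_code C) (hperf : perfect1 C)
  (hcyc : zzcyclic (dual C))
  (z : ZZvec (2 ^ r - 1) (2 ^ (r - 1) * (2 ^ r - 1)))
  (hz : z \in dual C) (hord : zzadd z z != zzzero _ _) :
  #|[set j | (z.2 j == 1) || (z.2 j == 3%:R)]| = (2 ^ (2 * r - 2))%N /\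
  #|[set j | z.2 j == 2%:R]| = (2 ^ (r - 2) * (2 ^ (r - 1) - 1))%N /\
  #|[set j | z.2 j == 0]| = (2 ^ (r - 2) * (2 ^ (r - 1) - 1))%N.
Proof.
have [u0 /= [h1 h2 h3 h4]] := @main_count _ _ C hadd hperf (z : V _ _) hz hord.
move: h1 h2 h3 h4.
set o := #|[set j | (z.2 j == 1) || (z.2 j == 3%:R)]|.
set t := #|[set j | z.2 j == 2%:R]|.
set n0 := #|[set j | z.2 j == 0]|.
have Pp : (0 < 2 ^ (r - 2))%N by rewrite expn_gt0.
have e1 : (2 ^ r = 4 * 2 ^ (r - 2))%N by rewrite -[in LHS](subnK hr) expnD mulnC.
have e2 : (2 ^ (r - 1) = 2 * 2 ^ (r - 2))%N.
  by rewrite -(expnS 2 (r - 2)); congr (2 ^ _)%N; lia.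
have e3 : (2 ^ (2 * r - 2) = 4 * 2 ^ (r - 2) * 2 ^ (r - 2))%N.
  have -> : (2 * r - 2 = (r - 2) + (r - 2) + 2)%N by lia.
  by rewrite !expnD mulnC mulnA.
rewrite e1 e2 e3; move: (2 ^ (r - 2))%N Pp => P Pp h1 h2 h3 h4.
split; [nia | split; nia].
Qed.
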